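(* Let $f\in\mathbb Z[x]$ with $3\nmid N_1(f)$, and for $i\geq1$ let $\omega_i=e^{2\pi i/3^i}$. (i) There exist $J\in\{0,1,2\}$, a sign $\pm$, and integers $A,b$ with $\pm\omega_1^Jf(\omega_1)=\delta+3A(\omega_1-1)+9b$, where $\delta=1,2,4$ according as $N_1(f)\equiv 1,4,7\pmod 9$; and then $\pm\omega_1^Jf(\omega_1)(1-\omega_1)=\delta(1-\omega_1)+9A+9B(1-\omega_1)$ with $B=b-A$. (ii) For every $i\geq 2$ there exist $h\in\mathbb Z[x]$ and $u(x)=\pm x^I(1+x)^J(x^4+1)^K$ with integers $I,J,K\geq 0$ (so $u(\omega_i)$ is a unit) such that $u(\omega_i)f(\omega_i)=1+(\omega_i-1)^5h(\omega_i)$. (iii) If in (ii) $3\mid h(1)$, then there exist $t\in\mathbb Z[x]$ and $u$ of the same form $\pm x^I(1+x)^J(x^4+1)^K$ with $u(\omega_i)f(\omega_i)=1+(\omega_i-1)^7t(\omega_i)$. (iv) If in (ii) $i=2$ and $3\nmid h(1)$, then for some $u$ of the form $\pm x^I(1+x)^J(x^4+1)^K$ and some $t\in\mathbb Z[x]$, $(1-\omega_2)u(\omega_2)f(\omega_2)=1-\omega_2+3\delta(\omega_2)+3(\omega_2-1)^2t(\omega_2)$ with $\delta(x)=x$ or $\delta(x)=-1$.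
   Context: $N_1(f)=f(\omega_1)f(\omega_1^2)$. *)

(* Defs.v *)
From HB Require Import structures.
From mathcomp Require Import all_boot all_order all_algebra.
From mathcomp Require Import reals trigo.
From mathcomp.real_closed Require Import complex.
Set Implicit Arguments. Unset Strict Implicit. Unset Printing Implicit Defensive.
Import Order.TTheory GRing.Theory Num.Theory.
Local Open Scope ring_scope.

Definition omega (R : realType) (i : nat) : R[i] :=
  Complex (cos (2 * pi / (3 ^+ i)%:R)) (sin (2 * pi / (3 ^+ i)%:R)).

Definition ev (R : realType) (f : {poly int}) (w : R[i]) : R[i] :=
  (map_poly (fun z : int => z%:~R) f).[w].

Definition N1 (R : realType) (f : {poly int}) : R[i] :=
  ev f (omega R 1) * ev f (omega R 1 ^+ 2).

Definition upoly (s : bool) (I J K : nat) : {poly int} :=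
  (-1) ^+ s *: ('X ^+ I * (1 + 'X) ^+ J * ('X ^+ 4 + 1) ^+ K).

(* Main.v *)
Require Import Defs.
From HB Require Import structures.
From mathcomp Require Import all_boot all_order all_algebra.
From mathcomp Require Import reals trigo.
From mathcomp.real_closed Require Import complex.
From mathcomp Require Import ring lra zify.
Import Order.TTheory GRing.Theory Num.Theory.
Local Open Scope ring_scope.

Section Trig.
Variable R : realType.
Definition cis (a : R) : R[i] := Complex (cos a) (sin a).
Lemma cisD a b : cis a * cis b = cis (a + b).
Proof. rewrite /cis /= cosD sinD; congr Complex; ring. Qed.
Lemma cisX a n : cis a ^+ n = cis (n%:R * a).
Proof.
elim: n => [|n IH]; first by rewrite expr0 mul0r /cis cos0 sin0.
by rewrite exprS IH cisD mulrSr mulrDl mul1r addrC.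
Qed.
Lemma omegaE i : omega R i = cis (2 * pi / (3 ^+ i)%:R).
Proof. by []. Qed.
Lemma nat3X m : ((3 ^+ m)%:R : R) = 3 ^+ m.
Proof. by rewrite natrXE natrX. Qed.
Lemma omega_pow k : omega R k.+2 ^+ (3 ^ k) = omega R 2.
Proof.
rewrite !omegaE cisX; congr cis.
rewrite !nat3X !exprS expr0. field.
by rewrite expf_neq0 // pnatr_eq0.
Qed.
Lemma omega_powg i k : omega R (k + i) ^+ (3 ^ k) = omega R i.
Proof.
rewrite !omegaE cisX; congr cis.
rewrite !nat3X exprD. field.
by rewrite !expf_neq0 // pnatr_eq0.
Qed.
Lemma omega21 : omega R 2 ^+ 3 = omega R 1.
Proof. by rewrite -(omega_powg 1 1) expn1. Qed.
Lemma omega13 : omega R 1 ^+ 3 = 1.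
Proof.
rewrite omegaE cisX /cis.
have -> : 3%:R * (2 * pi / (3 ^+ 1)%:R) = pi *+ 2 :> R.
  by rewrite nat3X expr1 mulr2n; field.
by rewrite cos2pi sin2pi.
Qed.
Lemma omega1_neq1 : omega R 1 != 1.
Proof.
apply/eqP => /(congr1 (@complex.Im R)) /=.
have : 0 < sin (2 * pi / (3 ^+ 1)%:R :> R).
  apply: sin_gt0_pi; rewrite nat3X expr1; have hp := pi_gt0 R; apply/andP; split; lra.
move=> h e; have e2 : sin (2 * pi / (3 ^+ 1)%:R) = 0 :> R := e.
by move: h; rewrite e2 ltxx.
Qed.
Lemma omega1_min : omega R 1 ^+ 2 + omega R 1 + 1 = 0.
Proof.
have := omega13; have := omega1_neq1; set w := omega R 1 => h1 h3.
have : (w - 1) * (w ^+ 2 + w + 1) = 0.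
  have -> : (w - 1) * (w ^+ 2 + w + 1) = w ^+ 3 - 1 by ring.
  by rewrite h3 subrr.
by move/eqP; rewrite mulf_eq0 subr_eq0 (negbTE h1) /= => /eqP.
Qed.
Lemma omega2_min : omega R 2 ^+ 6 + omega R 2 ^+ 3 + 1 = 0.
Proof. by rewrite -omega1_min -omega21 -exprM. Qed.
End Trig.

Lemma choose_c (h1 e : int) : ~~ (3 %| e)%Z -> exists (c : nat) (m : int), (c%:Z * e + h1 = 3 * m)%Z.
Proof.
move=> he.
have : (e %% 3 = 1 \/ e %% 3 = 2)%Z by lia.
have : (h1 %% 3 = 0 \/ h1 %% 3 = 1 \/ h1 %% 3 = 2)%Z by lia.
case=> [h|[h|h]] [g|g].
- by exists 0%N, ((0%:Z * e + h1) %/ 3)%Z; lia.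
- by exists 0%N, ((0%:Z * e + h1) %/ 3)%Z; lia.
- by exists 2%N, ((2%:Z * e + h1) %/ 3)%Z; lia.
- by exists 1%N, ((1%:Z * e + h1) %/ 3)%Z; lia.
- by exists 1%N, ((1%:Z * e + h1) %/ 3)%Z; lia.
- by exists 2%N, ((2%:Z * e + h1) %/ 3)%Z; lia.
Qed.

Section Alg.
Variable R : realType.
Implicit Types (p q : {poly int}) (w : R[i]).
Lemma evD p q w : ev (p + q) w = ev p w + ev q w.
Proof. by rewrite /ev rmorphD hornerD. Qed.
Lemma evM p q w : ev (p * q) w = ev p w * ev q w.
Proof. by rewrite /ev rmorphM hornerM. Qed.
Lemma evN p w : ev (- p) w = - ev p w.
Proof. by rewrite /ev rmorphN hornerN. Qed.
Lemma evX w : ev 'X w = w.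
Proof. by rewrite /ev map_polyX hornerX. Qed.
Lemma evC c w : ev c%:P w = c%:~R.
Proof. by rewrite /ev map_polyC hornerC. Qed.
Lemma ev1 w : ev 1 w = 1.
Proof. by rewrite /ev rmorph1 hornerC. Qed.
Lemma ev0 w : ev 0 w = 0.
Proof. by rewrite /ev rmorph0 horner0. Qed.
Lemma evn n w : ev n%:R w = n%:R.
Proof. by rewrite /ev rmorph_nat -polyC_natr hornerC. Qed.
Lemma evXn p n w : ev (p ^+ n) w = ev p w ^+ n.
Proof. by rewrite /ev rmorphXn horner_exp. Qed.
Lemma ev_comp p r w : ev (p \Po r) w = ev p (ev r w).
Proof. by rewrite /ev map_comp_poly horner_comp. Qed.
Definition evE := (evXn, evD, evM, evN, evX, evC, ev1, ev0, evn).

Lemma ev_upoly s I J K w :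
  ev (upoly s I J K) w = (-1) ^+ s * w ^+ I * (1 + w) ^+ J * (w ^+ 4 + 1) ^+ K.
Proof.
rewrite /upoly -mul_polyC !evE.
by case: s; rewrite /= ?expr0 ?expr1; ring.
Qed.

Lemma upolyM s I J K s' I' J' K' w :
  ev (upoly s I J K) w * ev (upoly s' I' J' K') w
  = ev (upoly (s (+) s') (I + I') (J + J') (K + K')) w.
Proof. rewrite !ev_upoly signr_addb !exprD; ring. Qed.

Lemma intr3 (m : int) : ((3 * m)%:~R : R[i]) = 3 * m%:~R.
Proof. by rewrite intrM. Qed.
Lemma intr3r (m : int) : ((m * 3)%:~R : R[i]) = m%:~R * 3.
Proof. by rewrite intrM. Qed.

Lemma taylor h w : exists h', ev h w = (h.[1])%:~R + (w - 1) * ev h' w.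
Proof.
have : root (h - (h.[1])%:P) 1 by rewrite /root hornerD hornerN hornerC subrr.
move/factor_theorem=> [h' e]; exists h'.
have -> : h = h' * ('X - 1%:P) + (h.[1])%:P by rewrite -e subrK.
rewrite !evE hornerD hornerM hornerC hornerD hornerN hornerX hornerC subrr mulr0 add0r.
ring.
Qed.

Lemma upclos sg Ig Jg Kg su Iu Ju Ku c w :
  exists s I J K, ev (upoly s I J K) w
     = ev (upoly sg Ig Jg Kg) w ^+ c * ev (upoly su Iu Ju Ku) w.
Proof.
elim: c => [|c [s [I [J [K e]]]]]; first by exists su, Iu, Ju, Ku; rewrite expr0 mul1r.
exists (sg (+) s), (Ig + I)%N, (Jg + J)%N, (Kg + K)%N.
by rewrite -upolyM e exprS mulrA.
Qed.

Lemma pow_rep (x : R[i]) w k e A c :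
  x = 1 + e%:~R * (w - 1) ^+ k.+1 + (w - 1) ^+ k.+2 * ev A w ->
  exists Ac, x ^+ c = 1 + (c%:Z * e)%:~R * (w - 1) ^+ k.+1 + (w - 1) ^+ k.+2 * ev Ac w.
Proof.
move=> hx; elim: c => [|c [Ac hAc]]; first by exists 0; rewrite expr0 !evE; ring.
exists (Ac + A + (c%:Z * e * e)%:P * ('X - 1) ^+ k + (c%:Z * e)%:P * ('X - 1) ^+ k.+1 * A
   + Ac * (e%:P * ('X - 1) ^+ k.+1 + ('X - 1) ^+ k.+2 * A)).
rewrite exprSr hAc hx !evE !exprS; ring.
Qed.

Section Hq.
Variable w : R[i].
Variable q : {poly int}.
Hypothesis hq : 3 = (w - 1) ^+ 6 * ev q w.

Lemma three_y : 3 = (w - 1) * ev (('X - 1) ^+ 5 * q) w.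
Proof. rewrite !evE hq; ring. Qed.

Definition good j f := exists h s I J K,
  ev (upoly s I J K) w * ev f w = 1 + (w - 1) ^+ j * ev h w.

Lemma step f k sg Ig Jg Kg e A :
  ~~ (3 %| e)%Z ->
  ev (upoly sg Ig Jg Kg) w = 1 + e%:~R * (w - 1) ^+ k.+1 + (w - 1) ^+ k.+2 * ev A w ->
  good k.+1 f -> good k.+2 f.
Proof.
move=> he hg [h [s [I [J [K hu]]]]].
have [h' hh] := taylor h w.
have [c [m hcm]] := choose_c h.[1] e he.
have [Ac hAc] := pow_rep _ _ _ _ _ c hg.
have [s2 [I2 [J2 [K2 e2]]]] := upclos sg Ig Jg Kg s I J K c w.
exists ((('X - 1) ^+ 5 * q) * m%:P + h' + Ac + (c%:Z * e)%:P * ('X - 1) ^+ k * h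
        + Ac * ('X - 1) ^+ k.+1 * h), s2, I2, J2, K2.
rewrite e2 -mulrA hu hAc.
have hm : (c%:Z * e)%:~R = 3 * m%:~R - (h.[1])%:~R :> R[i].
  by rewrite -[LHS](addrK ((h.[1])%:~R)) -intrD hcm; ring.
rewrite !evE hm hh three_y !evE !exprS; ring.
Qed.

Lemma by_hq (a b c : R[i]) : a - b = (3 - (w - 1) ^+ 6 * ev q w) * c -> a = b.
Proof. by rewrite -hq subrr mul0r => /eqP; rewrite subr_eq0 => /eqP. Qed.

Lemma gen1 : ev (upoly false 1 0 0) w = 1 + 1%:~R * (w - 1) ^+ 1 + (w - 1) ^+ 2 * ev 0 w.
Proof. rewrite ev_upoly !evE /=; ring. Qed.

Lemma gen2 : ev (upoly true 1 1 0) w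
  = 1 + (-1)%:~R * (w - 1) ^+ 2 + (w - 1) ^+ 3 * ev (- (('X - 1) ^+ 3 * q * 'X)) w.
Proof. apply: (@by_hq _ _ (- w)); rewrite ev_upoly !evE /=; ring. Qed.

Lemma gen3 : ev (upoly false 3 0 0) w
  = 1 + 1%:~R * (w - 1) ^+ 3 + (w - 1) ^+ 4 * ev (('X - 1) ^+ 2 * q * (('X - 1) + ('X - 1) ^+ 2)) w.
Proof. apply: (@by_hq _ _ ((w - 1) + (w - 1) ^+ 2)); rewrite ev_upoly !evE /=; ring. Qed.

Definition B4 : {poly int} := (-3)%:P + (-24)%:P * ('X - 1) + (-102)%:P * ('X - 1) ^+ 2 + (-272)%:P * ('X - 1) ^+ 3 + (-507)%:P * ('X - 1) ^+ 4.
Definition A4 : {poly int} := (-2072)%:P + (-2101)%:P * ('X - 1) + (-1582)%:P * ('X - 1) ^+ 2 + (-871)%:P * ('X - 1) ^+ 3 + (-340)%:P * ('X - 1) ^+ 4 + (-89)%:P * ('X - 1) ^+ 5 + (-14)%:P * ('X - 1) ^+ 6 - ('X - 1) ^+ 7.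

Lemma gen4 : ev (upoly true 6 2 1) w
  = 1 + 1%:~R * (w - 1) ^+ 4 + (w - 1) ^+ 5 * ev (A4 + ('X - 1) * q * B4) w.
Proof. apply: (@by_hq _ _ (ev B4 w)); rewrite ev_upoly /A4 /B4 !evE; ring. Qed.


Definition B6 : {poly int} := -12 - 22 * ('X - 1) - 21 * ('X - 1) ^+ 2 - 11 * ('X - 1) ^+ 3
   - 3 * ('X - 1) ^+ 4.

Lemma gen6 : ev (upoly true 3 3 0) w
  = 1 + (-1)%:~R * (w - 1) ^+ 6 + (w - 1) ^+ 7 * ev (q * B6 - ('X - 1) ^+ 5 * q ^+ 2) w.
Proof.
apply: (@by_hq _ _ ((w - 1) * ev B6 w - 3 - (w - 1) ^+ 6 * ev q w)).
rewrite ev_upoly /B6 !evE /=; ring.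
Qed.

Lemma good1 f : ~~ (3 %| f.[1])%Z -> good 1 f.
Proof.
move=> hf; have [f' hf'] := taylor f w.
have : (f.[1] %% 3 = 1 \/ f.[1] %% 3 = 2)%Z by lia.
case=> hm.
- have [m hm'] : exists m, (f.[1] = 1 + 3 * m)%Z by exists ((f.[1] - 1) %/ 3)%Z; lia.
  exists (f' + ('X - 1) ^+ 5 * q * m%:P), false, 0%N, 0%N, 0%N.
  rewrite ev_upoly hf' hm' intrD intr3 three_y !evE /=; ring.
- have [m hm'] : exists m, (f.[1] = - 1 + 3 * m)%Z by exists ((f.[1] + 1) %/ 3)%Z; lia.
  exists (- f' - ('X - 1) ^+ 5 * q * m%:P), true, 0%N, 0%N, 0%N.
  rewrite ev_upoly hf' hm' intrD intr3 three_y !evE /=; ring.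
Qed.

Lemma part_ii f : ~~ (3 %| f.[1])%Z -> good 5 f.
Proof.
move=> hf.
apply: (step _ _ _ _ _ _ _ _ _ gen4) => //.
apply: (step _ _ _ _ _ _ _ _ _ gen3) => //.
apply: (step _ _ _ _ _ _ _ _ _ gen2) => //.
apply: (step _ _ _ _ _ _ _ _ _ gen1) => //.
exact: good1.
Qed.

Lemma part_iii f h s I J K :
  ev (upoly s I J K) w * ev f w = 1 + (w - 1) ^+ 5 * ev h w ->
  (3 %| h.[1])%Z -> good 7 f.
Proof.
move=> hu /dvdzP [m hm].
apply: (step _ _ _ _ _ _ _ _ _ gen6) => //.
have [h' hh] := taylor h w.
exists (h' + ('X - 1) ^+ 5 * q * m%:P), s, I, J, K.
rewrite hu hh hm intr3r three_y !evE /=; ring.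
Qed.
End Hq.
End Alg.

Set Implicit Arguments. Unset Strict Implicit.

Lemma choose_iv (h1 a1 : int) : ~~ (3 %| h1)%Z ->
  exists (k : nat) (b : bool) (m0 m1 : int),
    if b then (h1 = 1 + 3 * m0 /\ a1 - k%:Z = 1 + 3 * m1)%Z
    else (h1 = -1 + 3 * m0 /\ a1 - k%:Z = 3 * m1)%Z.
Proof.
move=> h3.
have : (h1 %% 3 = 1 \/ h1 %% 3 = 2)%Z by lia.
have : (a1 %% 3 = 0 \/ a1 %% 3 = 1 \/ a1 %% 3 = 2)%Z by lia.
case=> [g|[g|g]] [e|e].
- by exists 2%N, true, ((h1 - 1) %/ 3)%Z, ((a1 - 2 - 1) %/ 3)%Z; lia.
- by exists 0%N, false, ((h1 + 1) %/ 3)%Z, ((a1 - 0) %/ 3)%Z; lia.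
- by exists 0%N, true, ((h1 - 1) %/ 3)%Z, ((a1 - 0 - 1) %/ 3)%Z; lia.
- by exists 1%N, false, ((h1 + 1) %/ 3)%Z, ((a1 - 1) %/ 3)%Z; lia.
- by exists 1%N, true, ((h1 - 1) %/ 3)%Z, ((a1 - 1 - 1) %/ 3)%Z; lia.
- by exists 2%N, false, ((h1 + 1) %/ 3)%Z, ((a1 - 2) %/ 3)%Z; lia.
Qed.

Section C.
Variable R : realType.

Lemma combine (a1 b1 a2 b2 a3 b3 a4 b4 X1 c3 c4 L Rh : R[i]) :
  a1 = b1 -> a2 = b2 -> a3 = b3 -> a4 = b4 ->
  L - Rh = (a1 - b1) * X1 + 3 * (a3 - b3) + c3 * (a2 - b2) + c4 * (a4 - b4) -> L = Rh.
Proof.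
move=> -> -> -> -> /eqP; rewrite !subrr !mulr0 !mul0r !addr0 subr_eq0 => /eqP.
done.
Qed.

Lemma by_zero (e L Rh c : R[i]) : e = 0 -> L - Rh = c * e -> L = Rh.
Proof. by move=> -> /eqP; rewrite mulr0 subr_eq0 => /eqP. Qed.

Lemma taylor2 (z : {poly int}) (w : R[i]) : exists a1 Z2,
  ev z w = (z.[1])%:~R + a1%:~R * (w - 1) + (w - 1) ^+ 2 * ev Z2 w.
Proof.
have [z' hz] := taylor R z w; have [z'' hz'] := taylor R z' w.
exists z'.[1], z''; rewrite hz hz'; ring.
Qed.

Definition Q0 : {poly int} := 10%:P + 11%:P * 'X + 7%:P * 'X ^+ 2 + 10%:P * 'X ^+ 3
  + 4%:P * 'X ^+ 4 - 4%:P * 'X ^+ 5.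
Definition R0 : {poly int} := 7%:P - 49%:P * 'X + 91%:P * 'X ^+ 2 - 74%:P * 'X ^+ 3
  + 28%:P * 'X ^+ 4 - 4%:P * 'X ^+ 5.
Definition r9 : {poly int} := - 2%:P * 'X + 5%:P * 'X ^+ 2 - 7%:P * 'X ^+ 3
  + 5%:P * 'X ^+ 4 - 2%:P * 'X ^+ 5.

Lemma r9_1 : r9.[1] = -1.
Proof. by rewrite /r9 !hornerE. Qed.

Lemma hr_omega2 : (omega R 2 - 1) ^+ 6 = 3 * ev r9 (omega R 2).
Proof.
apply: (by_zero (omega2_min R) (c := 1)).
rewrite /r9 !evE; ring.
Qed.

Lemma hq_omega k : exists q : {poly int},
  3 = (omega R k.+2 - 1) ^+ 6 * ev q (omega R k.+2).
Proof.
set w := omega R k.+2.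
have hz : (w ^+ (3 ^ k)) ^+ 6 + (w ^+ (3 ^ k)) ^+ 3 + 1 = 0.
  by rewrite /w omega_pow omega2_min.
have base : 3 = (w ^+ (3 ^ k) - 1) ^+ 6 * ev Q0 (w ^+ (3 ^ k)).
  apply: (by_zero hz (c := - ev R0 (w ^+ (3 ^ k)))).
  rewrite /Q0 /R0 !evE; ring.
have : root ('X ^+ (3 ^ k) - 1 : {poly int}) 1.
  by rewrite /root hornerD hornerN hornerXn expr1n hornerC subrr.
move/factor_theorem => [S hS].
have hzS : w ^+ (3 ^ k) - 1 = ev S w * (w - 1).
  by have := congr1 (fun p => ev p w) hS; rewrite /= !evE.
exists (S ^+ 6 * (Q0 \Po 'X ^+ (3 ^ k))).
rewrite {1}base hzS !evE ev_comp !evE; ring.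
Qed.

Section IV.
Variable w : R[i].
Variable q : {poly int}.
Hypothesis hq : 3 = (w - 1) ^+ 6 * ev q w.
Variable r : {poly int}.
Hypothesis hr : (w - 1) ^+ 6 = 3 * ev r w.
Hypothesis hr1 : r.[1] = -1.

Lemma part_iv f h s I J K :
  ev (upoly s I J K) w * ev f w = 1 + (w - 1) ^+ 5 * ev h w ->
  ~~ (3 %| h.[1])%Z ->
  exists (t : {poly int}) (s' : bool) (I' J' K' : nat) (dl : {poly int}),
    (dl = 'X \/ dl = -1) /\
    (1 - w) * ev (upoly s' I' J' K') w * ev f w
      = 1 - w + 3 * ev dl w + 3 * (w - 1) ^+ 2 * ev t w.
Proof.
move=> hu h3.
have [r' hr'] := taylor R r w; rewrite hr1 in hr'.
have [a1 [Z2 hz]] := taylor2 (- (r * h)) w.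
have hz1 : (- (r * h)).[1] = h.[1] by rewrite hornerN hornerM hr1 mulN1r opprK.
rewrite hz1 in hz.
have [k [b [m0 [m1 hb]]]] := choose_iv a1 h3.
have [Ak hAk] := pow_rep _ _ _ _ _ _ k (@gen6 R w q hq).
have [s2 [I2 [J2 [K2 e2]]]] := upclos R true 3 3 0 s I J K k w.
set G := ev (upoly true 3 3 0) w in hAk e2.
set U := ev (upoly s I J K) w in hu e2.
exists (('X - 1) ^+ 4 * q * (m0%:P + m1%:P * ('X - 1)) + Z2 + (k%:Z)%:P * r'
        + r * ((k%:Z)%:P * ('X - 1) ^+ 4 * h - Ak - ('X - 1) ^+ 5 * Ak * h)),
  s2, I2, J2, K2, (if b then 'X else -1).
split; first by case: (b); [left|right].
rewrite e2.
have -> : (1 - w) * (G ^+ k * U) * ev f w = (1 - w) * G ^+ k * (U * ev f w) by ring.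
rewrite hu hAk.
case: b hb => [] [ha0 ha1].
- have ha1' : a1 = k%:Z + 1 + 3 * m1 by lia.
  rewrite ha0 ha1' in hz.
  apply: (combine (X1 := - ev h w + k%:~R * (w - 1) + (w - 1) ^+ 2 *
       (k%:~R * (w - 1) ^+ 4 * ev h w - ev Ak w - (w - 1) ^+ 5 * ev Ak w * ev h w))
     (c3 := 3 * k%:~R * (w - 1)) (c4 := 3 * (m0%:~R + m1%:~R * (w - 1))) hr hr' hz hq).
  rewrite !evE; ring.
- have ha1' : a1 = k%:Z + 3 * m1 by lia.
  rewrite ha0 ha1' in hz.
  apply: (combine (X1 := - ev h w + k%:~R * (w - 1) + (w - 1) ^+ 2 *
       (k%:~R * (w - 1) ^+ 4 * ev h w - ev Ak w - (w - 1) ^+ 5 * ev Ak w * ev h w))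
     (c3 := 3 * k%:~R * (w - 1)) (c4 := 3 * (m0%:~R + m1%:~R * (w - 1))) hr hr' hz hq).
  rewrite !evE; ring.
Qed.
End IV.
End C.


Lemma core9 (c E n : int) : n = c ^+ 2 - 3 * c * E + 9 * E ^+ 2 -> ~~ (3 %| n)%Z ->
  exists (s : bool) (d B : int),
    [\/ ((n %% 9)%Z = 1 /\ d = 1), ((n %% 9)%Z = 4 /\ d = 2)
       | ((n %% 9)%Z = 7 /\ d = 4)] /\
    (if s then - (c + 3 * E) else c + 3 * E) = d + 9 * B.
Proof.
move=> hn h3.
set v := c + 3 * E.
have hv : v = 9 * (v %/ 9)%Z + (v %% 9)%Z by lia.
move: hv; set V := (v %/ 9)%Z; set rv := (v %% 9)%Z => hv.
have hrv : (0 <= rv < 9)%Z by lia.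
have hc : c = 9 * V + rv - 3 * E by lia.
have hn' : n = 9 * (9 * V ^+ 2 + 2 * V * rv - E * c) + rv ^+ 2.
  by rewrite hn hc; ring.
move: hn'; move: (9 * V ^+ 2 + 2 * V * rv - E * c) => K hn'.
have : rv = 0 \/ rv = 1 \/ rv = 2 \/ rv = 3 \/ rv = 4 \/ rv = 5 \/ rv = 6 \/ rv = 7 \/ rv = 8 by lia.
rewrite -/v hv.
case=> [e|[e|[e|[e|[e|[e|[e|[e|e]]]]]]]]; rewrite e in hn' *; rewrite ?expr2 in hn'.
- by exfalso; move: h3; rewrite hn'; lia.
- by exists false, 1, V; split; [constructor 1; lia | lia].
- by exists false, 2, V; split; [constructor 2; lia | lia].
- by exfalso; move: h3; rewrite hn'; lia.
- by exists false, 4, V; split; [constructor 3; lia | lia].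
- by exists true, 4, (- V - 1); split; [constructor 3; lia | lia].
- by exfalso; move: h3; rewrite hn'; lia.
- by exists true, 2, (- V - 1); split; [constructor 2; lia | lia].
- by exists true, 1, (- V - 1); split; [constructor 1; lia | lia].
Qed.

Lemma red2 (f : {poly int}) : exists d (a b : int),
  f = d * ('X ^+ 2 + 'X + 1) + (a%:P + b%:P * 'X).
Proof.
elim/poly_ind: f => [|p c [d [a [b ->]]]].
  by exists 0, 0, 0; rewrite mul0r add0r mul0r addr0.
exists (d * 'X + b%:P), (c - b), (a - b); rewrite !polyCB; ring.
Qed.

Section I.
Variable R : realType.
Local Notation w := (omega R 1).

Lemma fin_i (J : nat) (c e n : int) (F : R[i]) :
  w ^+ J * F = c%:~R + e%:~R * w -> n = c ^+ 2 - c * e + e ^+ 2 ->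
  (3 %| e)%Z -> ~~ (3 %| n)%Z ->
  exists (s : bool) (A b d : int),
     [\/ ((n %% 9)%Z = 1 /\ d = 1), ((n %% 9)%Z = 4 /\ d = 2)
       | ((n %% 9)%Z = 7 /\ d = 4)] /\
     (-1) ^+ s * w ^+ J * F
       = d%:~R + 3 * A%:~R * (w - 1) + 9 * b%:~R /\
     (-1) ^+ s * w ^+ J * F * (1 - w)
       = d%:~R * (1 - w) + 9 * A%:~R + 9 * (b - A)%:~R * (1 - w).
Proof.
move=> hF hn /dvdzP [E he] h3.
have hn2 : n = c ^+ 2 - 3 * c * E + 9 * E ^+ 2 by rewrite hn he; ring.
have [s [d [B [hd hcs]]]] := core9 hn2 h3.
have eq1 : (-1) ^+ s * w ^+ J * F
    = d%:~R + 3 * (if s then - E else E)%:~R * (w - 1) + 9 * B%:~R.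
  rewrite -mulrA hF he.
  case: s hcs => /= hcs.
  - have hc : c = - d - 9 * B - 3 * E by lia.
    rewrite hc; rewrite !rmorphD /= !rmorphN /= !rmorphM /=; ring.
  - have hc : c = d + 9 * B - 3 * E by lia.
    rewrite hc; rewrite !rmorphD /= !rmorphN /= !rmorphM /=; ring.
exists s, (if s then - E else E), B, d; split => //; split => //.
rewrite eq1.
apply: (by_zero (omega1_min R) (c := -3 * (if s then - E else E)%:~R)).
rewrite !rmorphB /=; ring.
Qed.

Lemma part_i (f : {poly int}) (n : int) :
  N1 R f = n%:~R -> ~~ (3 %| n)%Z ->
  (exists (J : nat) (s : bool) (A b : int) (d : int),
     (J < 3)%N /\
     [\/ ((n %% 9)%Z = 1 /\ d = 1), ((n %% 9)%Z = 4 /\ d = 2)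
       | ((n %% 9)%Z = 7 /\ d = 4)] /\
     (-1) ^+ s * w ^+ J * ev f w
       = d%:~R + 3 * A%:~R * (w - 1) + 9 * b%:~R /\
     (-1) ^+ s * w ^+ J * ev f w * (1 - w)
       = d%:~R * (1 - w) + 9 * A%:~R + 9 * (b - A)%:~R * (1 - w))
  /\ ~~ (3 %| f.[1])%Z.
Proof.
move=> hN h3.
have hw := omega1_min R.
have hw3 := omega13 R.
have [d [a [b hf]]] := red2 f.
have hev : ev f w = a%:~R + b%:~R * w.
  by rewrite hf !evE hw mulr0 add0r.
have hw2 : (w ^+ 2) ^+ 2 + w ^+ 2 + 1 = 0.
  apply: (by_zero hw (c := w ^+ 2 - w + 1)). ring.
have hev2 : ev f (w ^+ 2) = a%:~R + b%:~R * w ^+ 2.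
  by rewrite hf !evE hw2 mulr0 add0r.
have hn : n = a ^+ 2 - a * b + b ^+ 2.
  apply: (@intr_inj R[i]); rewrite -hN /N1 hev hev2.
  apply: (by_zero hw (c := a%:~R * b%:~R + b%:~R ^+ 2 * (w - 1))).
  rewrite !rmorphD /= !rmorphN /= !rmorphM /=; ring.
have hab : ~~ (3 %| a + b)%Z.
  apply: contra h3 => /dvdzP [t ht].
  have hb : b = t * 3 - a by lia.
  apply/dvdzP; exists (3 * t ^+ 2 - a * b); rewrite hn hb; nia.
split; last first.
  have -> : f.[1] = 3 * d.[1] + (a + b).
    rewrite hf !(hornerD, hornerM, hornerXn, hornerX, hornerC); ring.
  by move: hab; lia.
have [hb3|hb3] := boolP (3 %| b)%Z.
  have e1 : w ^+ 0 * ev f w = a%:~R + b%:~R * w by rewrite expr0 mul1r hev.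
  have e2 : n = a ^+ 2 - a * b + b ^+ 2 by [].
  have [s [A [B [dd H]]]] := fin_i e1 e2 hb3 h3.
  by exists 0%N, s, A, B, dd.
have [ha3|ha3] := boolP (3 %| a)%Z.
  have e3 : (3 %| - a)%Z by move: ha3; lia.
  have e1 : w ^+ 2 * ev f w = (b - a)%:~R + (- a)%:~R * w.
    apply: (by_zero hw (c := a%:~R + b%:~R * (w - 1))).
    rewrite hev !rmorphB /= !rmorphN /=; ring.
  have e2 : n = (b - a) ^+ 2 - (b - a) * (- a) + (- a) ^+ 2 by rewrite hn; ring.
  have [s [A [B [dd H]]]] := fin_i e1 e2 e3 h3.
  by exists 2%N, s, A, B, dd.
have e3 : (3 %| a - b)%Z by move: hab ha3 hb3; lia.
have e1 : w ^+ 1 * ev f w = (- b)%:~R + (a - b)%:~R * w.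
  apply: (by_zero hw (c := b%:~R)).
  rewrite hev !rmorphB /= !rmorphN /=; ring.
have e2 : n = (- b) ^+ 2 - (- b) * (a - b) + (a - b) ^+ 2 by rewrite hn; ring.
have [s [A [B [dd H]]]] := fin_i e1 e2 e3 h3.
by exists 1%N, s, A, B, dd.
Qed.
End I.

Unset Implicit Arguments. Set Strict Implicit.

Theorem lemma4p1 (R : realType) (f : {poly int}) (n : int)
  (hn : N1 R f = n%:~R) (h3 : ~~ (3 %| n)%Z) :
  (* (i) *)
  (let w := omega R 1 in
   exists (J : nat) (s : bool) (A b : int) (d : int),
     (J < 3)%N /\
     [\/ ((n %% 9)%Z = 1 /\ d = 1), ((n %% 9)%Z = 4 /\ d = 2)
       | ((n %% 9)%Z = 7 /\ d = 4)] /\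
     (-1) ^+ s * w ^+ J * ev f w
       = d%:~R + 3 * A%:~R * (w - 1) + 9 * b%:~R /\
     (-1) ^+ s * w ^+ J * ev f w * (1 - w)
       = d%:~R * (1 - w) + 9 * A%:~R + 9 * (b - A)%:~R * (1 - w)) /\
  (* (ii) *)
  (forall i : nat, (2 <= i)%N ->
     exists (h : {poly int}) (s : bool) (I J K : nat),
       ev (upoly s I J K) (omega R i) * ev f (omega R i)
         = 1 + (omega R i - 1) ^+ 5 * ev h (omega R i)) /\
  (* (iii) *)
  (forall (i : nat) (h : {poly int}) (s : bool) (I J K : nat), (2 <= i)%N ->
     ev (upoly s I J K) (omega R i) * ev f (omega R i)
       = 1 + (omega R i - 1) ^+ 5 * ev h (omega R i) ->
     (3 %| h.[1])%Z ->
     exists (t : {poly int}) (s' : bool) (I' J' K' : nat),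
       ev (upoly s' I' J' K') (omega R i) * ev f (omega R i)
         = 1 + (omega R i - 1) ^+ 7 * ev t (omega R i)) /\
  (* (iv) *)
  (forall (h : {poly int}) (s : bool) (I J K : nat),
     ev (upoly s I J K) (omega R 2) * ev f (omega R 2)
       = 1 + (omega R 2 - 1) ^+ 5 * ev h (omega R 2) ->
     ~~ (3 %| h.[1])%Z ->
     exists (t : {poly int}) (s' : bool) (I' J' K' : nat) (dl : {poly int}),
       (dl = 'X \/ dl = -1) /\
       (1 - omega R 2) * ev (upoly s' I' J' K') (omega R 2) * ev f (omega R 2)
         = 1 - omega R 2 + 3 * ev dl (omega R 2)
           + 3 * (omega R 2 - 1) ^+ 2 * ev t (omega R 2)).
Proof.
have [Hi H1] := part_i hn h3.
split; first exact: Hi.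
split.
  case=> [|[|k]] // _.
  have [q hq] := hq_omega R k.
  exact: (part_ii _ _ _ hq _ H1).
split.
  case=> [|[|k]] h s I J K // _ hu h3'.
  have [q hq] := hq_omega R k.
  exact: (part_iii _ _ _ hq _ _ _ _ _ _ hu h3').
move=> h s I J K hu h3'.
have [q hq] := hq_omega R 0.
exact: (part_iv hq (hr_omega2 R) (r9_1) hu h3').
Qed.
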